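(* Let $\varphi\in\mathcal{L}$. If there is a multi-agent graded belief model (MAGBM) $(S,U)$ with $(S,U)\models\varphi$, then there is a quasi-notional graded doxastic model (QNGDM) $M$ and a world $w$ of $M$ with $(M,w)\models\varphi$.
   Context: Fix a countably infinite set of atoms $\mathit{Atm}$ and a finite set of agents $\mathit{Agt}=\{1,\dots,n\}$; a group is a non-empty subset $J\subseteq\mathit{Agt}$, $2^{\mathit{Agt}*}$ the set of groups. $\mathbb{N}_0$ (resp. $\mathbb{N}_1$) are the naturals with (resp. without) $0$; $\mathbb{N}_0^{\omega}=\mathbb{N}_0\cup\{\omega\}$, $\mathbb{N}_1^{\omega}=\mathbb{N}_1\cup\{\omega\}$ with $\omega$ infinite. A multiset over $X$ is a function $X\to\mathbb{N}_0^{\omega}$. A possibly infinite sum of grades equals the sum of its non-zero summands if there are finitely many and none is $\omega$, and $\omega$ otherwise. For $k\in\mathbb{N}_0$ and group $J$, $P(J,k)$ is the set of $\delta:J\to\mathbb{N}_0$ with $\sum_{i\in J}\delta(i)=k$. $\mathcal{L}_0$: $\alpha::=p\mid\neg\alpha\mid\alpha\wedge\alpha\mid\triangle_i^k\alpha$ ($p\in\mathit{Atm}$, $i\in\mathit{Agt}$, $k\in\mathbb{N}_1^{\omega}$). $\mathcal{L}$: $\varphi::=\alpha\mid\neg\varphi\mid\varphi\wedge\varphi\mid\Box_J^k\varphi$ ($\alpha\in\mathcal{L}_0$, $J$ a group, $k\in\mathbb{N}_0$). MAGBM semantics: a state is $S=(\mathcal{B}_1,\dots,\mathcal{B}_n,V)$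 with each $\mathcal{B}_i$ a multiset over $\mathcal{L}_0$ and $V\subseteq\mathit{Atm}$; $\mathbf{S}$ is the set of states. $S\models p$ iff $p\in V$; Boolean clauses as usual; $S\models\triangle_i^k\alpha$ iff $\mathcal{B}_i(\alpha)\ge k$. For a group $J$, $\mathcal{B}_J(\alpha)=\sum_{i\in J}\mathcal{B}_i(\alpha)$; for $k\in\mathbb{N}_0$, $S\mathcal{R}_J^kS'$ iff $\sum_{\alpha\in\mathcal{L}_0,S'\not\models\alpha}\mathcal{B}_J(\alpha)\le k$. An MAGBM is a pair $(S,U)$ with $S\in\mathbf{S}$, $U\subseteq\mathbf{S}$; $(S,U)\models\alpha$ iff $S\models\alpha$ for $\alpha\in\mathcal{L}_0$; Boolean clauses as usual; $(S,U)\models\Box_J^k\varphi$ iff for all $S'\in U$ with $S\mathcal{R}_J^kS'$, $(S',U)\models\varphi$. QNGDM: a tuple $M=(W,\mathcal{D},\rho,\mathcal{V})$ with $W$ a set of worlds, $\mathcal{D}:\mathit{Agt}\times W\to$ (multisets over $\mathcal{L}_0$), $\rho:2^{\mathit{Agt}*}\times W\times W\to\mathbb{N}_0^{\omega}$, $\mathcal{V}:\mathit{Atm}\to2^W$, with satisfaction $(M,w)\models p$ iff $w\in\mathcal{V}(p)$; Boolean clauses as usual; $(M,w)\models\triangle_i^k\alpha$ iff $\mathcal{D}(i,w)(\alpha)\ge k$; $(M,w)\models\Box_J^k\varphi$ iff for all $u\in W$ with $\rho(J,w,u)\le k$, $(M,u)\models\varphi$; and such that for every group $J$ and $w,u\in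 W$ with $\rho(J,w,u)\ne\omega$: (i) $\rho(J,w,u)\ge\sum_{\alpha\in\mathcal{L}_0,(M,u)\not\models\alpha}\sum_{i\in J}\mathcal{D}(i,w)(\alpha)$; (ii) there is $\delta\in P(J,\rho(J,w,u))$ with $\sum_{i\in J'}\delta(i)\ge\rho(J',w,u)$ for every non-empty $J'\subset J$. *)

(* Defs.v *)
From mathcomp Require Import all_boot.
From Stdlib Require Import List ClassicalEpsilon.
Set Implicit Arguments. Unset Strict Implicit. Unset Printing Implicit Defensive.

Inductive grade := Fin of nat | Omega.

Definition grade_le (a b : grade) : Prop :=
  match a, b with
  | _, Omega => True
  | Omega, Fin _ => False
  | Fin x, Fin y => (x <= y)%N
  end.

Inductive pgrade := PFin (k : nat) of (0 < k)%N | POmega.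
Definition grade_of_pgrade (k : pgrade) : grade :=
  match k with PFin m _ => Fin m | POmega => Omega end.

Definition fin_val (g : grade) : nat := match g with Fin k => k | Omega => 0 end.

(* Possibly infinite sum of the grades f x over the x with P x:
   the sum of the non-zero summands if there are finitely many and none is
   omega, and omega otherwise. [s] enumerates exactly the non-zero summands. *)
Definition gsum_spec {X : Type} (P : X -> Prop) (f : X -> grade) (s : list X) : Prop :=
  List.NoDup s /\ (forall x, List.In x s <-> (P x /\ f x <> Fin 0))
  /\ (forall x, P x -> f x <> Omega).

Definition gsum {X : Type} (P : X -> Prop) (f : X -> grade) : grade :=
  match excluded_middle_informative (exists s, gsum_spec P f s) with
  | left h =>
      Fin (List.fold_right (fun x acc => fin_val (f x) + acc) 0
             (proj1_sig (constructive_indefinite_description _ h)))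
  | right _ => Omega
  end.

Section Lang.
Variable n : nat.  (* agents are 'I_n, i.e. {1,...,n} *)

Definition group := {J : {set 'I_n} | J != set0}.

Inductive form0 :=
  | Atom0 (p : nat)
  | Neg0 (a : form0)
  | And0 (a b : form0)
  | Tri (i : 'I_n) (k : pgrade) (a : form0).

Inductive form :=
  | Base (a : form0)
  | Neg (f : form)
  | And (f g : form)
  | Box (J : group) (k : nat) (f : form).

Fixpoint sat0 (val : nat -> Prop) (B : 'I_n -> form0 -> grade) (a : form0) : Prop :=
  match a with
  | Atom0 p => val p
  | Neg0 b => ~ sat0 val B b
  | And0 b c => sat0 val B b /\ sat0 val B c
  | Tri i k b => grade_le (grade_of_pgrade k) (B i b)
  end.

Definition BJ (B : 'I_n -> form0 -> grade) (J : group) (a : form0) : grade :=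
  gsum (fun i => i \in proj1_sig J) (fun i => B i a).

Record state := mkState { SB : 'I_n -> form0 -> grade; SV : nat -> Prop }.

Definition sat_state (S : state) (a : form0) : Prop := sat0 (SV S) (SB S) a.

Definition Rel (J : group) (k : nat) (S S' : state) : Prop :=
  grade_le (gsum (fun a => ~ sat_state S' a) (BJ (SB S) J)) (Fin k).

Fixpoint satM (U : state -> Prop) (S : state) (f : form) : Prop :=
  match f with
  | Base a => sat_state S a
  | Neg g => ~ satM U S g
  | And g h => satM U S g /\ satM U S h
  | Box J k g => forall S', U S' -> Rel J k S S' -> satM U S' g
  end.

End Lang.

Record qframe (n : nat) := mkQ {
  qW : Type;
  qD : 'I_n -> qW -> form0 n -> grade;
  qrho : group n -> qW -> qW -> grade;
  qV : nat -> qW -> Prop }.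
Arguments qW {n} q.
Arguments qD {n} q _ _ _.
Arguments qrho {n} q _ _ _.
Arguments qV {n} q _ _.

Definition sat0W {n : nat} (M : qframe n) (w : qW M) (a : form0 n) : Prop :=
  sat0 (fun p => qV M p w) (fun i => qD M i w) a.

Fixpoint satQ {n : nat} (M : qframe n) (w : qW M) (f : form n) : Prop :=
  match f with
  | Base a => sat0W w a
  | Neg g => ~ satQ w g
  | And g h => satQ w g /\ satQ w h
  | Box J k g => forall u : qW M, grade_le (qrho M J w u) (Fin k) -> satQ u g
  end.

Definition is_QNGDM {n : nat} (M : qframe n) : Prop :=
  forall (J : group n) (w u : qW M), qrho M J w u <> Omega ->
    (* (i) *)
    grade_le (gsum (fun a => ~ sat0W u a) (BJ (fun i => qD M i w) J)) (qrho M J w u)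
    (* (ii) *)
    /\ (exists delta : 'I_n -> nat,
          Fin (\sum_(i in proj1_sig J) delta i)%N = qrho M J w u
          /\ forall J' : group n, proj1_sig J' \proper proj1_sig J ->
               grade_le (qrho M J' w u) (Fin (\sum_(i in proj1_sig J') delta i)%N)).

(* Main.v *)
Require Import Defs.
From mathcomp Require Import all_boot.
From Stdlib Require Import List Permutation ClassicalEpsilon.
From mathcomp Require Import zify.

Definition fsum {X : Type} (h : X -> nat) (s : list X) : nat :=
  List.fold_right (fun x acc => h x + acc) 0 s.

Definition hP {X : Type} (P : X -> Prop) (f : X -> grade) (x : X) : nat :=
  if excluded_middle_informative (P x) then fin_val (f x) else 0.

Lemma fsum_perm {X} (h : X -> nat) s t : Permutation s t -> fsum h s = fsum h t.
Proof. unfold fsum; induction 1; simpl in *; lia. Qed.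

Lemma fsum_ext {X} (h g : X -> nat) s : (forall x, List.In x s -> h x = g x) ->
  fsum h s = fsum g s.
Proof. unfold fsum; induction s as [|a s IH]; simpl; intros H; auto. Qed.

Lemma fsum_filter {X} (h : X -> nat) (b : X -> bool) s :
  (forall x, b x = false -> h x = 0) -> fsum h s = fsum h (List.filter b s).
Proof.
  unfold fsum; intros H; induction s as [|a s IH]; simpl; auto.
  destruct (b a) eqn:E; simpl; rewrite IH; auto. rewrite H; auto.
Qed.

Lemma fsum_big {X} (h : X -> nat) s : fsum h s = \sum_(x <- s) h x.
Proof. unfold fsum; induction s as [|a s IH]; simpl. by rewrite big_nil. by rewrite big_cons IH. Qed.

Lemma gsum_sup {X : Type} (P : X -> Prop) (f : X -> grade) (s : list X) :
  NoDup s -> (forall x, P x -> f x <> Omega) ->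
  (forall x, P x -> f x <> Fin 0 -> List.In x s) ->
  gsum P f = Fin (fsum (hP P f) s).
Proof.
  intros Hs Hom Hsup.
  set b := fun x => if excluded_middle_informative (P x /\ f x <> Fin 0) then true else false.
  assert (Hspec : gsum_spec P f (List.filter b s)).
  { split; [apply NoDup_filter; auto|split; auto].
    intros x; rewrite filter_In; unfold b.
    destruct (excluded_middle_informative (P x /\ f x <> Fin 0)) as [h|h]; simpl; split.
    - tauto.
    - intros HH; split; [apply Hsup; tauto|reflexivity].
    - intros [_ H']; discriminate.
    - tauto. }
  unfold gsum.
  destruct (excluded_middle_informative (exists s0, gsum_spec P f s0)) as [h|h].
  2: { exfalso; apply h; eauto. }
  destruct (constructive_indefinite_description _ h) as [s0 [H0 [H1 H2]]]; simpl.
  f_equal.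
  transitivity (fsum (hP P f) s0).
  { apply fsum_ext. intros x Hx. unfold hP.
    destruct (excluded_middle_informative (P x)); auto. exfalso. apply H1 in Hx; tauto. }
  rewrite (fsum_filter (hP P f) b s).
  - apply fsum_perm. apply NoDup_Permutation; auto.
    + apply Hspec.
    + intros x. rewrite H1. symmetry. apply Hspec.
  - intros x; unfold b, hP.
    destruct (excluded_middle_informative (P x /\ f x <> Fin 0)) as [hh|h']; simpl; [discriminate|].
    intros _. destruct (excluded_middle_informative (P x)) as [p|]; auto.
    destruct (f x) as [[|k]|] eqn:E; simpl; auto.
    exfalso; apply h'; split; auto; intros E'; rewrite E' in E; discriminate.
Qed.

Lemma gsum_fin_inv {X : Type} (P : X -> Prop) (f : X -> grade) m :
  gsum P f = Fin m ->
  (forall x, P x -> f x <> Omega) /\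
  exists s, NoDup s /\ (forall x, P x -> f x <> Fin 0 -> List.In x s) /\ m = fsum (hP P f) s.
Proof.
  intros E.
  destruct (excluded_middle_informative (exists s0, gsum_spec P f s0)) as [h|h].
  - destruct h as [s0 [H0 [H1 H2]]].
    split; auto. exists s0. split; auto. split. intros x a b; apply H1; auto.
    rewrite (@gsum_sup _ P f s0) in E; auto.
    + congruence.
    + intros x a b; apply H1; auto.
  - unfold gsum in E. destruct (excluded_middle_informative _); [tauto|discriminate].
Qed.

Lemma gsum_noomega {X : Type} (P : X -> Prop) (f : X -> grade) x :
  gsum P f <> Omega -> P x -> f x <> Omega.
Proof.
  unfold gsum. destruct (excluded_middle_informative _) as [h|h].
  - intros _. destruct h as [s [_ [_ H]]]; auto.
  - tauto.
Qed.

Lemma In_mem (T : eqType) (x : T) (s : seq.seq T) : List.In x s <-> x \in s.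
Proof.
  induction s as [|a s IH]; simpl. by rewrite seq.in_nil; split.
  rewrite seq.in_cons; split.
  - case=> [->|h]; first by rewrite eqxx.
    by apply/orP; right; apply/IH.
  - case/orP=> [/eqP ->|h]; [by left|by right; apply/IH].
Qed.

Lemma uniq_NoDup (T : eqType) (s : seq.seq T) : uniq s -> NoDup s.
Proof.
  elim: s => [|a s IH] /=; first by constructor.
  case/andP=> h1 h2; constructor; last by apply: IH.
  by rewrite In_mem; apply/negP.
Qed.

Lemma gsum_fin_ord n (J : {set 'I_n}) (f : 'I_n -> grade) :
  (forall i, i \in J -> f i <> Omega) ->
  gsum (fun i => i \in J) f = Fin (\sum_(i in J) fin_val (f i)).
Proof.
  move=> H.
  rewrite (@gsum_sup _ _ f (enum 'I_n)).
  - congr Fin. rewrite fsum_big big_enum /= [RHS]big_mkcond /=.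
    apply: eq_big => // i _. rewrite /hP.
    case: excluded_middle_informative => h /=.
    + by rewrite h.
    + by move/negP/negbTE: h => ->.
  - apply: uniq_NoDup; exact: enum_uniq.
  - exact: H.
  - move=> x _ _; by rewrite In_mem mem_enum.
Qed.

Lemma grade_le_refl g : grade_le g g.
Proof. by case: g => //= k; rewrite leqnn. Qed.

Lemma sum_sub n (A B : {set 'I_n}) (F : 'I_n -> nat) :
  A \subset B -> (\sum_(i in A) F i <= \sum_(i in B) F i)%N.
Proof.
  move=> /subsetP sAB. rewrite [X in (X <= _)%N]big_mkcond [X in (_ <= X)%N]big_mkcond.
  apply: leq_sum => i _.
  case iA: (i \in A); first by rewrite (sAB _ iA).
  by case: (i \in B).
Qed.

Definition Mdef {n} (U : state n -> Prop) : qframe n :=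
  @mkQ n (state n) (fun i w a => SB w i a)
    (fun J w u => if excluded_middle_informative (U u)
                  then gsum (fun a => ~ sat_state u a) (BJ (SB w) J) else Omega)
    (fun p w => SV w p).

Lemma rho_eq {n} (U : state n -> Prop) J (w u : state n) : U u ->
  qrho (Mdef U) J w u = gsum (fun a => ~ sat_state u a) (BJ (SB w) J).
Proof. move=> Uu /=. by case: excluded_middle_informative. Qed.

Lemma satQ_M n (U : state n -> Prop) (phi : form n) :
  forall w : state n, (@satQ n (Mdef U) w phi) <-> satM U w phi.
Proof.
  induction phi as [a|g IH|g IHg h IHh|J k g IH]; intros w; simpl.
  - reflexivity.
  - rewrite IH; tauto.
  - rewrite IHg IHh; tauto.
  - split.
    + intros H S' US' HR. apply IH. apply H.
      case: excluded_middle_informative => // _.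
    + intros H u. case: excluded_middle_informative => [Uu|] // HR.
      apply IH. by apply H.
Qed.

Lemma Mdef_QNGDM n (U : state n -> Prop) : is_QNGDM (Mdef U).
Proof.
  move=> J w u H.
  have Uu : U u.
  { move: H => /=. case: excluded_middle_informative => //. }
  rewrite (rho_eq _ J w u Uu) in H *.
  split; first exact: grade_le_refl.
  set P := fun a => ~ sat_state u a.
  case E: (gsum P (BJ (SB w) J)) H => [m|] // _.
  have [Hom [s [Hs [Hsup _]]]] := gsum_fin_inv _ _ _ E.
  pose delta := fun i => fsum (hP P (fun a => SB w i a)) s.
  have HiJ : forall a i, P a -> i \in proj1_sig J -> SB w i a <> Omega.
  { move=> a i Pa iJ. apply: (@gsum_noomega _ (fun i => i \in proj1_sig J)
            (fun i => SB w i a)) => //. exact: Hom. }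
  have BJval : forall (J' : group n) a, proj1_sig J' \subset proj1_sig J -> P a ->
      BJ (SB w) J' a = Fin (\sum_(i in proj1_sig J') fin_val (SB w i a)).
  { move=> J' a sub Pa. rewrite /BJ gsum_fin_ord //.
    move=> i iJ'. apply: HiJ => //. exact: (subsetP sub). }
  have key : forall J' : group n, proj1_sig J' \subset proj1_sig J ->
      gsum P (BJ (SB w) J') = Fin (\sum_(i in proj1_sig J') delta i).
  { move=> J' sub.
    rewrite (@gsum_sup _ _ _ s) //.
    - congr Fin. rewrite fsum_big /delta.
      rewrite (eq_bigr (fun i => \sum_(a <- s) hP P (SB w i) a)); last first.
        by move=> i _; rewrite fsum_big.
      rewrite exchange_big /=.
      apply: eq_bigr => a _. rewrite /hP.
      case: excluded_middle_informative => Pa.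
      + by rewrite /= BJval.
      + by rewrite /= big1.
    - move=> a Pa. by rewrite BJval.
    - move=> a Pa. rewrite BJval // => Hne. apply: Hsup => //.
      rewrite BJval // ?subxx //.
      move=> [] Hz. apply: Hne. congr Fin.
      apply/eqP; rewrite -leqn0.
      apply: leq_trans (@sum_sub _ _ _ (fun i => fin_val (SB w i a)) sub) _.
      by rewrite Hz. }
  exists delta. split.
  - by rewrite -key ?subxx.
  - move=> J' prop. rewrite rho_eq // key; first exact: grade_le_refl.
    exact: proper_sub.
Qed.


Theorem lemma4 (n : nat) (phi : form n) :
  (exists (S : state n) (U : state n -> Prop), satM U S phi) ->
  exists (M : qframe n) (w : qW M), is_QNGDM M /\ satQ w phi.
Proof.
  move=> [S [U H]]. exists (Mdef U), S. split.
  - exact: Mdef_QNGDM.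
  - by apply/satQ_M.
Qed.
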